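(* Let $(\mathfrak g_1,\eta_1,\omega_1)$ and $(\mathfrak g_2,\eta_2,\omega_2)$ be two $(2n+1)$-dimensional almost cosymplectic (respectively, $\alpha$-cosymplectic, for a fixed $\alpha\in\mathbb R$) Lie algebras with $d\eta_1=d\eta_2=0$, and for $i=1,2$ let $\mathfrak h_i=\ker\eta_i$, $\Omega_i=\omega_i|_{\mathfrak h_i\times\mathfrak h_i}$ and $D_i=\mathrm{ad}_{\xi_i}|_{\mathfrak h_i}$, where $\xi_i$ is the Reeb vector of $(\eta_i,\omega_i)$. Then $(\mathfrak g_1,\eta_1,\omega_1)$ and $(\mathfrak g_2,\eta_2,\omega_2)$ are isomorphic if and only if there exists an isomorphism $\psi:(\mathfrak h_1,\Omega_1)\to(\mathfrak h_2,\Omega_2)$ of almost symplectic Lie algebras such that $\psi\circ D_1=D_2\circ\psi$.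
   Context: For a Lie algebra, $d\eta(x,y)=-\eta([x,y])$ and $d\omega(x,y,z)=-\omega([x,y],z)-\omega([y,z],x)-\omega([z,x],y)$. An almost cosymplectic structure on a $(2n+1)$-dimensional Lie algebra $\mathfrak g$ is $(\eta,\omega)$, $\eta\in\mathfrak g^*$, $\omega$ a $2$-form, with $\eta\wedge\omega^n\neq0$; its Reeb vector $\xi$ is the unique element with $\eta(\xi)=1$, $\omega(\xi,\cdot)=0$; it is $\alpha$-cosymplectic if $d\eta=0$ and $d\omega=2\alpha\,\eta\wedge\omega$. When $d\eta=0$, $\ker\eta$ is a Lie subalgebra, $\Omega$ is almost symplectic (i.e. $\Omega^n\ne0$) and $D_i$ is a derivation. Two almost cosymplectic Lie algebras are isomorphic if there is a Lie algebra isomorphism $\Psi:\mathfrak g_1\to\mathfrak g_2$ with $\Psi^*\omega_2=\omega_1$ and $\eta_2\circ\Psi=\eta_1$. Two almost symplectic Lie algebras $(\mathfrak h_1,\Omega_1),(\mathfrak h_2,\Omega_2)$ are isomorphic via a Lie algebra isomorphism $\psi$ with $\psi^*\Omega_2=\Omega_1$. *)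

(* Defs.v *)
From HB Require Import structures.
From mathcomp Require Import all_boot all_order all_algebra all_fingroup.
From mathcomp Require Import reals.
Set Implicit Arguments. Unset Strict Implicit. Unset Printing Implicit Defensive.
Import Order.TTheory GRing.Theory Num.Theory.
Local Open Scope ring_scope.

Section LieDefs.
Variable R : realType.

Definition is_lie_bracket (V : vectType R) (br : V -> V -> V) : Prop :=
  [/\ (forall a x y z, br (a *: x + y) z = a *: br x z + br y z),
      (forall a x y z, br z (a *: x + y) = a *: br z x + br z y),
      (forall x, br x x = 0) &
      (forall x y z, br x (br y z) + br y (br z x) + br z (br x y) = 0)].

Definition is_2form (V : vectType R) (om : V -> V -> R) : Prop :=
  [/\ (forall a x y z, om (a *: x + y) z = a * om x z + om y z),
      (forall a x y z, om z (a *: x + y) = a * om z x + om z y) &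
      (forall x, om x x = 0)].

(* (eta /\ omega^n)(v_0, ..., v_2n), up to a nonzero normalising constant. *)
Definition eta_wedge_omega_pow (V : vectType R) (n : nat) (eta : 'Hom(V, R^o))
    (om : V -> V -> R) (v : 'I_(n.*2.+1) -> V) : R :=
  \sum_(s : 'S_(n.*2.+1))
     (-1) ^+ s * ((eta (v (s ord0)) : R) *
        \prod_(k < n) om (v (s (inord k.*2.+1))) (v (s (inord k.*2.+2)))).

Arguments eta_wedge_omega_pow {V} n eta om v.

Definition almost_cosymplectic (V : vectType R) (n : nat) (eta : 'Hom(V, R^o))
    (om : V -> V -> R) : Prop :=
  is_2form om /\ exists v, eta_wedge_omega_pow n eta om v != 0.

Definition d1 (V : vectType R) (br : V -> V -> V) (eta : 'Hom(V, R^o)) x y : R :=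
  - (eta (br x y) : R).

Definition d2 (V : vectType R) (br : V -> V -> V) (om : V -> V -> R) x y z : R :=
  - om (br x y) z - om (br y z) x - om (br z x) y.

Definition wedge12 (V : vectType R) (eta : 'Hom(V, R^o)) (om : V -> V -> R) x y z : R :=
  (eta x : R) * om y z + (eta y : R) * om z x + (eta z : R) * om x y.

Definition closed_eta (V : vectType R) (br : V -> V -> V) (eta : 'Hom(V, R^o)) : Prop :=
  forall x y, d1 br eta x y = 0.

Definition alpha_cosymplectic (V : vectType R) (n : nat) (br : V -> V -> V)
    (alpha : R) (eta : 'Hom(V, R^o)) (om : V -> V -> R) : Prop :=
  [/\ almost_cosymplectic n eta om, closed_eta br eta &
      forall x y z, d2 br om x y z = 2 * alpha * wedge12 eta om x y z].

Definition is_reeb (V : vectType R) (eta : 'Hom(V, R^o)) (om : V -> V -> R) (xi : V) : Prop :=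
  (eta xi : R) = 1 /\ forall y, om xi y = 0.

Definition hker (V : vectType R) (eta : 'Hom(V, R^o)) := subvs_of (lker eta).

Definition hbr (V : vectType R) (br : V -> V -> V) (eta : 'Hom(V, R^o))
    (x y : hker eta) : hker eta := vsproj (lker eta) (br (vsval x) (vsval y)).

Definition hOmega (V : vectType R) (eta : 'Hom(V, R^o)) (om : V -> V -> R)
    (x y : hker eta) : R := om (vsval x) (vsval y).

Definition hD (V : vectType R) (br : V -> V -> V) (eta : 'Hom(V, R^o)) (xi : V)
    (x : hker eta) : hker eta := vsproj (lker eta) (br xi (vsval x)).

Definition acs_isomorphic (V1 V2 : vectType R)
    (br1 : V1 -> V1 -> V1) (eta1 : 'Hom(V1, R^o)) (om1 : V1 -> V1 -> R)
    (br2 : V2 -> V2 -> V2) (eta2 : 'Hom(V2, R^o)) (om2 : V2 -> V2 -> R) : Prop :=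
  exists Psi : 'Hom(V1, V2),
    [/\ bijective Psi,
        (forall x y, Psi (br1 x y) = br2 (Psi x) (Psi y)),
        (forall x y, om2 (Psi x) (Psi y) = om1 x y) &
        (forall x, (eta2 (Psi x) : R) = eta1 x)].

End LieDefs.

(* Main.v *)
Require Import Defs.
From HB Require Import structures.
From mathcomp Require Import all_boot all_order all_algebra all_fingroup.
From mathcomp Require Import reals ring lra zify.
From Stdlib Require Import FunctionalExtensionality.
Set Implicit Arguments. Unset Strict Implicit. Unset Printing Implicit Defensive.
Import Order.TTheory GRing.Theory Num.Theory.
Local Open Scope ring_scope.

Section MkLin.
Variables (K : fieldType) (U W : vectType K).
Definition mkLin (f : U -> W) (hf : linear f) : {linear U -> W} :=
  HB.pack f (GRing.isLinear.Build K U W *:%R f hf).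
Lemma mkHomE f hf x : linfun (@mkLin f hf) x = f x.
Proof. by rewrite lfunE. Qed.
End MkLin.

Section Det.
Variables (R : realType) (V : vectType R) (n : nat) (eta : 'Hom(V, R^o)) (om : V -> V -> R).
Hypothesis hom : is_2form om.
Local Notation N := n.*2.+1.

Definition Gt (w : 'I_N -> V) : R :=
  (eta (w ord0) : R) * \prod_(k < n) om (w (inord k.*2.+1)) (w (inord k.*2.+2)).

Definition Ft v := @eta_wedge_omega_pow R V n eta om v.

Lemma FtE v : Ft v = \sum_(s : 'S_N) (-1) ^+ s * Gt (fun i => v (s i)).
Proof. by []. Qed.

Definition radical (u : V) := [/\ (eta u : R) = 0, forall y, om u y = 0 & forall y, om y u = 0].

Definition wz (w : 'I_N -> V) (k : 'I_N) (z : V) := fun i => if i == k then z else w i.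

Lemma om0l y : om 0 y = 0.
Proof. case: hom => h1 _ _; have := h1 1 0 0 y; rewrite scale1r addr0 => H; lra. Qed.
Lemma om0r y : om y 0 = 0.
Proof. case: hom => _ h1 _; have := h1 1 0 0 y; rewrite scale1r addr0 => H; lra. Qed.

Lemma val_inord_odd k : (k < n)%N -> val (inord k.*2.+1 : 'I_N) = k.*2.+1.
Proof. move=> hk; apply: inordK; rewrite ltnS -!muln2; lia. Qed.
Lemma val_inord_even k : (k < n)%N -> val (inord k.*2.+2 : 'I_N) = k.*2.+2.
Proof. move=> hk; apply: inordK; rewrite ltnS -!muln2; lia. Qed.

Lemma G_slot (w : 'I_N -> V) (k : 'I_N) : exists l : V -> R, exists C : R,
  [/\ (forall a x y, l (a *: x + y) = a * l x + l y),
      (forall u, radical u -> l u = 0) &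
      (forall z, Gt (wz w k z) = l z * C)].
Proof.
case: hom => hl hr _.
have [->|k0] := eqVneq k ord0.
  exists (fun z => eta z : R), (\prod_(m < n) om (w (inord m.*2.+1)) (w (inord m.*2.+2))).
  split.
  - by move=> a x y; rewrite linearP.
  - by move=> u [].
  move=> z; rewrite /Gt /wz eqxx; congr (_ * _); apply: eq_bigr => m _.
  have h1 : (inord m.*2.+1 : 'I_N) != ord0 by apply/eqP => /(congr1 val); rewrite val_inord_odd.
  have h2 : (inord m.*2.+2 : 'I_N) != ord0 by apply/eqP => /(congr1 val); rewrite val_inord_even.
  by rewrite (negbTE h1) (negbTE h2).
have kpos : (0 < val k)%N by rewrite lt0n; apply: contra k0 => /eqP h; apply/eqP/val_inj.
set m0 := (val k).-1./2.
have hm0 : (m0 < n)%N.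
  have hkN : (val k < n.*2.+1)%N := ltn_ord k.
  rewrite /m0; move: (val k) hkN kpos => kk; rewrite -divn2 -muln2 => ? ?; lia.
have hk : val k = m0.*2.+1 \/ val k = m0.*2.+2.
  rewrite /m0; move: (val k) kpos => kk hkk; rewrite -!muln2 -divn2.
  have := divn_eq kk.-1 2; have := ltn_pmod kk.-1 (isT : (0 < 2)%N).
  case: (kk.-1 %% 2)%N => [|[|//]] _ h; [left|right]; lia.
have vo m : (m < n)%N -> (inord m.*2.+1 : 'I_N) == k = (m.*2.+1 == val k).
  by move=> hm; rewrite -val_eqE /= val_inord_odd.
have ve m : (m < n)%N -> (inord m.*2.+2 : 'I_N) == k = (m.*2.+2 == val k).
  by move=> hm; rewrite -val_eqE /= val_inord_even.
have e0 : (ord0 == k) = false by rewrite eq_sym (negbTE k0).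
have Pz z : \prod_(m < n) om (wz w k z (inord m.*2.+1)) (wz w k z (inord m.*2.+2)) =
    om (wz w k z (inord m0.*2.+1)) (wz w k z (inord m0.*2.+2)) *
    \prod_(m < n | m != Ordinal hm0) om (w (inord m.*2.+1)) (w (inord m.*2.+2)).
  rewrite (bigD1 (Ordinal hm0)) //=; congr (_ * _); apply: eq_bigr => m hm.
  have hmn := ltn_ord m.
  have : nat_of_ord m != m0 by apply: contra hm => /eqP h; apply/eqP/val_inj.
  rewrite /wz vo // ve // => h; case: hk => ->; rewrite !ifN //; apply/eqP; rewrite -?muln2; lia.
case: hk => hk.
- exists (fun z => om z (w (inord m0.*2.+2))),
    ((eta (w ord0) : R) * \prod_(m < n | m != Ordinal hm0) om (w (inord m.*2.+1)) (w (inord m.*2.+2))).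
  split.
  + by move=> a x y; rewrite hl.
  + by move=> u [].
  move=> z; rewrite /Gt Pz {1}/wz e0 /wz vo // ve // hk eqxx.
  have -> : (m0.*2.+2 == m0.*2.+1)%N = false by rewrite -!muln2; apply/eqP; lia.
  by rewrite mulrCA.
- exists (fun z => om (w (inord m0.*2.+1)) z),
    ((eta (w ord0) : R) * \prod_(m < n | m != Ordinal hm0) om (w (inord m.*2.+1)) (w (inord m.*2.+2))).
  split.
  + by move=> a x y; rewrite hr.
  + by move=> u [].
  move=> z; rewrite /Gt Pz {1}/wz e0 /wz vo // ve // hk eqxx.
  have -> : (m0.*2.+1 == m0.*2.+2)%N = false by rewrite -!muln2; apply/eqP; lia.
  by rewrite mulrCA.
Qed.

Lemma Ft_perm v (g : 'S_N) : Ft (fun i => v (g i)) = (-1) ^+ g * Ft v.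
Proof.
rewrite !FtE mulr_sumr [in RHS](reindex_inj (@mulIg _ g)) /=.
apply: eq_bigr => s _.
rewrite odd_permM signr_addb.
have -> : (fun i => v ((s * g)%g i)) = (fun i => v (g (s i))) by apply: functional_extensionality => i; rewrite permM.
have hg : (-1) ^+ g * (-1) ^+ g = 1 :> R by rewrite -expr2 sqrr_sign.
move: hg; set G := Gt _; set a := (-1) ^+ s; set b := (-1) ^+ g => hg.
by rewrite (mulrC a b) -!mulrA mulrA hg mul1r.
Qed.

Lemma Ft_alt v (i j : 'I_N) : i != j -> v i = v j -> Ft v = 0.
Proof.
move=> hij hv.
have := Ft_perm v (tperm i j).
have -> : (fun k => v (tperm i j k)) = v.
  apply: functional_extensionality => k; case: tpermP => [->|->|]; by [rewrite hv|].
rewrite odd_tperm hij expr1 mulN1r => H.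
have : Ft v *+ 2 = 0 by rewrite mulr2n {1}H addNr.
by move/eqP; rewrite mulrn_eq0 /= => /eqP.
Qed.

Lemma Ft_slot v (k : 'I_N) : exists L : V -> R,
  [/\ (forall a x y, L (a *: x + y) = a * L x + L y),
      (forall u, radical u -> L u = 0) &
      (forall z, Ft (wz v k z) = L z)].
Proof.
have H (s : 'S_N) := G_slot (fun i => v (s i)) (s^-1 k)%g.
pose L z := \sum_(s : 'S_N) (-1) ^+ s * Gt (wz (fun i => v (s i)) (s^-1 k)%g z).
have HL z : Ft (wz v k z) = L z.
  rewrite FtE; apply: eq_bigr => s _; congr (_ * Gt _); apply: functional_extensionality => i.
  by rewrite /wz -{1}(permKV s k) (inj_eq (@perm_inj _ s)).
exists L; split => //.
- move=> a x y; rewrite /L mulr_sumr -big_split /=; apply: eq_bigr => s _.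
  have [l [C [hl _ hG]]] := H s.
  by rewrite !hG hl mulrDl mulrDr -(mulrA a) mulrCA.
- move=> u hu; rewrite /L big1 // => s _.
  have [l [C [_ hr hG]]] := H s.
  by rewrite hG hr // mul0r mulr0.
Qed.

Lemma Ft_radical_slot v (k : 'I_N) u : radical u -> Ft (wz v k u) = 0.
Proof. by move=> hu; have [L [_ hr ->]] := Ft_slot v k; rewrite hr. Qed.


Lemma Ft_zero (u : V) : u != 0 -> radical u -> \dim (fullv : {vspace V}) = N ->
  forall v, Ft v = 0.
Proof.
move=> u0 hu hd v.
pose w k := v (inord k).
pose W k := (<[u]> + <<[seq w i | i <- iota 0 k]>>)%VS.
case: (boolP [exists j : 'I_N, w j \in W j]) => [/existsP [j hj] | hno]; last first.
  have key : forall k, (k <= N)%N -> (k.+1 <= \dim (W k))%N.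
    elim => [_|k IH hk].
      by rewrite /W /= span_nil addv0 dim_vline u0.
    have hWk : W k.+1 = (W k + <[w k]>)%VS.
      by rewrite /W -addn1 iotaD map_cat span_cat /= span_seq1 addvA.
    have lt : (\dim (W k) < \dim (W k.+1))%N.
      rewrite hWk (ltn_leqif (dimv_leqif_sup (addvSl _ _))) subv_add subvv /= -memvE.
      apply: contra hno => hm; apply/existsP; exists (Ordinal hk); exact: hm.
    exact: leq_ltn_trans (IH (ltnW hk)) lt.
  have := key N (leqnn _).
  have := dimvS (subvf (W N)); rewrite hd => h1 h2.
  by have := leq_trans h2 h1; rewrite ltnn.
have [L [hl hr hF]] := Ft_slot v j.
have hlin : linear (L : V -> R^o) by move=> a x y; exact: hl.
pose f := linfun (mkLin hlin).
have fE x : f x = L x by rewrite /f mkHomE.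
have sub : (W j <= lker f)%VS.
  rewrite subv_add; apply/andP; split.
    by rewrite -memvE memv_ker fE hr.
  apply/span_subvP => x /mapP [i hi ->].
  rewrite memv_ker fE -hF; apply/eqP.
  have hij : (i < j)%N by rewrite mem_iota in hi.
  have hiN : (i < N)%N by exact: ltn_trans hij (ltn_ord j).
  have hne : j != (inord i : 'I_N).
    apply/eqP => /(congr1 val) /=; rewrite inordK // => h; move: hij; rewrite -h ltnn.
    by [].
  apply: (Ft_alt hne); rewrite /wz eqxx eq_sym (negbTE hne); by [].
have : w j \in lker f by apply: (subvP sub).
rewrite memv_ker fE -hF => /eqP <-.
congr Ft; apply: functional_extensionality => i; rewrite /wz /w inord_val.
by case: eqP => [->|].
Qed.

Lemma reeb_unique xi xi' : \dim (fullv : {vspace V}) = N ->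
  (exists v, Ft v != 0) -> is_reeb eta om xi -> is_reeb eta om xi' -> xi = xi'.
Proof.
move=> hd [v hv] [e1 o1] [e2 o2].
apply/eqP; rewrite -subr_eq0; apply/negPn/negP => hu.
have omDl x y z : om (x + y) z = om x z + om y z.
  by case: hom => h1 _ _; have := h1 1 x y z; rewrite scale1r mul1r.
have omDr x y z : om z (x + y) = om z x + om z y.
  by case: hom => _ h2 _; have := h2 1 x y z; rewrite scale1r mul1r.
have skew x y : om x y = - om y x.
  case: hom => _ _ h3.
  have := h3 (x + y); rewrite omDl !omDr !h3 => H; lra.
have omB x y z : om (x - y) z = om x z - om y z.
  case: hom => h1 _ _; have := h1 (-1) y x z; rewrite scaleN1r addrC => ->; lra.
have rad : radical (xi - xi').
  split.
  - by rewrite linearB /= e1 e2 subrr.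
  - by move=> y; rewrite omB o1 o2 subrr.
  - by move=> y; rewrite skew omB o1 o2 subrr oppr0.
by move: hv; rewrite (Ft_zero hu rad hd) eqxx.
Qed.

End Det.
Section Bil.
Variables (R : realType) (V : vectType R).

Lemma brD (br : V -> V -> V) : is_lie_bracket br ->
  [/\ forall x y z, br (x + y) z = br x z + br y z,
      forall x y z, br z (x + y) = br z x + br z y,
      forall a x z, br (a *: x) z = a *: br x z,
      forall a x z, br z (a *: x) = a *: br z x &
      forall x y, br x y = - br y x].
Proof.
case=> h1 h2 h3 _.
have Dl x y z : br (x + y) z = br x z + br y z by have := h1 1 x y z; rewrite !scale1r.
have Dr x y z : br z (x + y) = br z x + br z y by have := h2 1 x y z; rewrite !scale1r.
have Zl a x z : br (a *: x) z = a *: br x z.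
  have := h1 a x 0 z; rewrite addr0 => ->.
  have : br 0 z = 0 by have := Dl 0 0 z; rewrite addr0 => /eqP; rewrite -subr_eq subrr eq_sym => /eqP.
  by move=> ->; rewrite addr0.
have Zr a x z : br z (a *: x) = a *: br z x.
  have := h2 a x 0 z; rewrite addr0 => ->.
  have : br z 0 = 0 by have := Dr 0 0 z; rewrite addr0 => /eqP; rewrite -subr_eq subrr eq_sym => /eqP.
  by move=> ->; rewrite addr0.
split => // x y.
have := h3 (x + y); rewrite Dl !Dr !h3 add0r addr0 => /eqP; rewrite addr_eq0 => /eqP //.
Qed.

Lemma br_expand (br : V -> V -> V) : is_lie_bracket br ->
  forall h k xi (a b : R), br (h + a *: xi) (k + b *: xi) = br h k + a *: br xi k - b *: br xi h.
Proof.
move=> hb; have [Dl Dr Zl Zr sk] := brD hb; case: hb => _ _ h3 _.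
move=> h k xi a b.
by rewrite Dl !Dr !Zl !Zr h3 !scaler0 addr0 (sk h xi) scalerN -addrA (addrC (- _)) addrA.
Qed.

Lemma omD (om : V -> V -> R) : is_2form om ->
  [/\ forall x y z, om (x + y) z = om x z + om y z,
      forall x y z, om z (x + y) = om z x + om z y,
      forall a x z, om (a *: x) z = a * om x z,
      forall a x z, om z (a *: x) = a * om z x &
      forall x y, om x y = - om y x].
Proof.
case=> h1 h2 h3.
have Dl x y z : om (x + y) z = om x z + om y z by have := h1 1 x y z; rewrite scale1r mul1r.
have Dr x y z : om z (x + y) = om z x + om z y by have := h2 1 x y z; rewrite scale1r mul1r.
have Zl a x z : om (a *: x) z = a * om x z.
  have := h1 a x 0 z; rewrite addr0 => ->.
  have : om 0 z = 0 by have := Dl 0 0 z; rewrite addr0 => H; lra.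
  by move=> ->; rewrite addr0.
have Zr a x z : om z (a *: x) = a * om z x.
  have := h2 a x 0 z; rewrite addr0 => ->.
  have : om z 0 = 0 by have := Dr 0 0 z; rewrite addr0 => H; lra.
  by move=> ->; rewrite addr0.
split => // x y.
have := h3 (x + y); rewrite Dl !Dr !h3 => H; lra.
Qed.

Lemma om_expand (om : V -> V -> R) xi : is_2form om -> (forall y, om xi y = 0) ->
  forall h k (a b : R), om (h + a *: xi) (k + b *: xi) = om h k.
Proof.
move=> ho hx h k a b; have [Dl Dr Zl Zr sk] := omD ho.
rewrite Dl !Dr !Zl !Zr !hx (sk h xi) hx; lra.
Qed.

Lemma inker (eta : 'Hom(V, R^o)) xi x : (eta xi : R) = 1 -> x - (eta x : R) *: xi \in lker eta.
Proof. by move=> e; rewrite memv_ker linearB linearZ /= e; apply/eqP; rewrite /GRing.scale /= mulr1 subrr. Qed.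

Lemma brker (br : V -> V -> V) (eta : 'Hom(V, R^o)) x y : closed_eta br eta -> br x y \in lker eta.
Proof. by move=> c; rewrite memv_ker; have := c x y; rewrite /d1 => /eqP; rewrite oppr_eq0. Qed.

End Bil.

Lemma etaZ (R : realType) (V : vectType R) (eta : 'Hom(V, R^o)) (c : R) v :
  (eta (c *: v) : R) = c * eta v.
Proof. by rewrite -[c *: v]addr0 linearP linear0 addr0. Qed.
Lemma etaD (R : realType) (V : vectType R) (eta : 'Hom(V, R^o)) u v :
  (eta (u + v) : R) = eta u + eta v.
Proof. by rewrite linearD. Qed.
Theorem mainTheorem8 (R : realType) (n : nat) (V1 V2 : vectType R)
    (br1 : V1 -> V1 -> V1) (eta1 : 'Hom(V1, R^o)) (om1 : V1 -> V1 -> R) (xi1 : V1)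
    (br2 : V2 -> V2 -> V2) (eta2 : 'Hom(V2, R^o)) (om2 : V2 -> V2 -> R) (xi2 : V2) :
  \dim (fullv : {vspace V1}) = n.*2.+1 ->
  \dim (fullv : {vspace V2}) = n.*2.+1 ->
  is_lie_bracket br1 -> is_lie_bracket br2 ->
  almost_cosymplectic n eta1 om1 -> almost_cosymplectic n eta2 om2 ->
  closed_eta br1 eta1 -> closed_eta br2 eta2 ->
  is_reeb eta1 om1 xi1 -> is_reeb eta2 om2 xi2 ->
  acs_isomorphic br1 eta1 om1 br2 eta2 om2 <->
  exists psi : 'Hom(hker eta1, hker eta2),
    [/\ bijective psi,
        (forall x y, psi (hbr br1 x y) = hbr br2 (psi x) (psi y)),
        (forall x y, hOmega om2 (psi x) (psi y) = hOmega om1 x y) &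
        (forall x, psi (hD br1 xi1 x) = hD br2 xi2 (psi x))].
Proof.
move=> hd1 hd2 hb1 hb2 [ho1 hF1] [ho2 hF2] hc1 hc2 [e1 o1] [e2 o2].
split.
- case=> Psi [[g hg1 hg2] hPb hPo hPe].
  have kerP x : x \in lker eta1 -> Psi x \in lker eta2.
    by rewrite !memv_ker hPe.
  have kerG y : y \in lker eta2 -> g y \in lker eta1.
    by rewrite !memv_ker -hPe hg2.
  have hxi : Psi xi1 = xi2.
    apply: (reeb_unique ho2 hd2 hF2) => //; split; first by rewrite hPe.
    by move=> y; rewrite -(hg2 y) hPo o1.
  pose p (x : hker eta1) : hker eta2 := vsproj (lker eta2) (Psi (vsval x)).
  have hlin : linear p by move=> a x y; rewrite /p !linearP.
  exists (linfun (mkLin hlin)); split.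
  + exists (fun y : hker eta2 => vsproj (lker eta1) (g (vsval y))) => x; rewrite mkHomE /p.
      by rewrite vsprojK ?hg1 ?vsvalK // kerP // subvsP.
    by rewrite vsprojK ?hg2 ?vsvalK // kerG // subvsP.
  + move=> x y; rewrite !mkHomE /p /hbr !vsprojK ?hPb //; try exact: kerP (subvsP _).
    exact: brker.
  + by move=> x y; rewrite !mkHomE /p /hOmega !vsprojK ?hPo //; exact: kerP (subvsP _).
  + move=> x; rewrite !mkHomE /p /hD !vsprojK ?hPb ?hxi //; try exact: kerP (subvsP _).
    exact: brker.
- case=> psi [[q hq1 hq2] hpb hpo hpd].
  pose P x := vsval (psi (vsproj (lker eta1) (x - (eta1 x : R) *: xi1))) + (eta1 x : R) *: xi2.
  pose Q y := vsval (q (vsproj (lker eta2) (y - (eta2 y : R) *: xi2))) + (eta2 y : R) *: xi1.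
  have hlin : linear P.
    move=> a x y; rewrite /P.
    have el : (eta1 (a *: x + y) : R) = a * eta1 x + eta1 y by rewrite linearP.
    rewrite el.
    have -> : a *: x + y - (a * eta1 x + eta1 y) *: xi1 =
      a *: (x - (eta1 x : R) *: xi1) + (y - (eta1 y : R) *: xi1).
      by rewrite scalerDl opprD addrACA scalerBr scalerA.
    rewrite !linearP /= scalerDl scalerDr scalerA addrACA.
    by [].
  have etaP x : (eta2 (P x) : R) = eta1 x.
    rewrite /P etaD etaZ e2.
    have := subvsP (psi (vsproj (lker eta1) (x - (eta1 x : R) *: xi1))); rewrite memv_ker => /eqP ->.
    by rewrite add0r mulr1.
  have etaQ y : (eta1 (Q y) : R) = eta2 y.
    rewrite /Q etaD etaZ e1.
    have := subvsP (q (vsproj (lker eta2) (y - (eta2 y : R) *: xi2))); rewrite memv_ker => /eqP ->.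
    by rewrite add0r mulr1.
  exists (linfun (mkLin hlin)); split.
  + exists Q => x; rewrite mkHomE.
      rewrite /Q etaP {1}/P addrK vsvalK hq1 vsprojK ?subrK //; exact: inker.
    rewrite /P etaQ {1}/Q addrK vsvalK hq2 vsprojK ?subrK //; exact: inker.
  + move=> x y; rewrite !mkHomE.
    pose a := (eta1 x : R). pose b := (eta1 y : R).
    pose Hx := vsproj (lker eta1) (x - a *: xi1).
    pose Hy := vsproj (lker eta1) (y - b *: xi1).
    pose Kx := vsval (psi Hx). pose Ky := vsval (psi Hy).
    have ex : x = vsval Hx + a *: xi1 by rewrite /Hx vsprojK ?subrK //; exact: inker.
    have ey : y = vsval Hy + b *: xi1 by rewrite /Hy vsprojK ?subrK //; exact: inker.
    have L : vsproj (lker eta1) (br1 x y) = hbr br1 Hx Hy + a *: hD br1 xi1 Hy - b *: hD br1 xi1 Hx.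
      have -> : br1 x y = br1 (vsval Hx + a *: xi1) (vsval Hy + b *: xi1) by rewrite -ex -ey.
      by rewrite (br_expand hb1) !linearB !linearD !linearZ.
    have L2 : vsval (psi (vsproj (lker eta1) (br1 x y))) = br2 Kx Ky + a *: br2 xi2 Ky - b *: br2 xi2 Kx.
      rewrite L !linearB !linearD !linearZ /= hpb !hpd /hbr /hD !vsprojK //; exact: brker.
    have R2 : br2 (P x) (P y) = br2 Kx Ky + a *: br2 xi2 Ky - b *: br2 xi2 Kx.
      by rewrite /P (br_expand hb2).
    rewrite R2 -L2 /P.
    have ebr : (eta1 (br1 x y) : R) = 0 by have := brker x y hc1; rewrite memv_ker => /eqP.
    by rewrite ebr !scale0r subr0 addr0.
  + move=> x y; rewrite !mkHomE /P.
    rewrite (om_expand ho2 o2).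
    have := hpo (vsproj (lker eta1) (x - (eta1 x : R) *: xi1)) (vsproj (lker eta1) (y - (eta1 y : R) *: xi1)).
    rewrite /hOmega => ->; rewrite !vsprojK; try exact: inker.
    by rewrite -(om_expand ho1 o1 _ _ (eta1 x) (eta1 y)) !subrK.
  + by move=> x; rewrite mkHomE.
Qed.
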